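(* (Completeness.) If $t\in SN_{d\beta}$, then $t$ is typable in $\cap J$, i.e. there exist an environment $\Gamma$ and a type $\sigma$ such that $\Gamma\vdash t:\sigma$ is derivable.
   Context: Terms $\mathtt T_J$: $t,u,r ::= x \mid \lambda x.t \mid t(u,y.r)$ ($y$ bound in $r$), up to $\alpha$-equivalence; $\{u/x\}t$ capture-avoiding substitution. List contexts $\mathtt D ::= \Diamond \mid t(u,y.\mathtt D)$. Distant beta: $\mathtt D\langle\lambda x.t\rangle(u,y.r) \mapsto_{d\beta} \{\{u/x\}\mathtt D\langle t\rangle/y\}r$ (variables bound by $\mathtt D$ not free in $u$, $x$ not in $\mathtt D$), $\to_{d\beta}$ its closure under all contexts; $SN_{d\beta}$ the set of terms with no infinite $\to_{d\beta}$-sequence. System $\cap J$: types $\sigma,\tau ::= \alpha \mid \mathcal M\to\sigma$, $\mathcal M=[\sigma_i]_{i\in I}$ a finite possibly empty multiset; $\sqcup$ multiset union; environments map variables to multisets, $\wedge$ pointwise union, $\Gamma;x:\mathcal M$ extension with $x\notin\mathrm{dom}\,\Gamma$. $\mathrm{ch}(\mathcal M)=\mathcal M$ if $\mathcal M\ne[\,]$, $\mathrm{ch}([\,])=[\tau]$ for an arbitrary $\tau$. Rules: (var) $x:[\sigma]\vdash x:\sigma$; (abs) from $\Gamma;x:\mathcal M\vdash t:\sigma$ infer $\Gamma\vdash\lambda x.t:\mathcal M\to\sigma$; (many) from $(\Gamma_i\vdash t:\sigma_i)_{i\in I}$, $I\ne\emptyset$, infer $\wedge_i\Gamma_i\vdash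 t:[\sigma_i]_{i\in I}$; (app) from $\Gamma\vdash t:\mathrm{ch}([\mathcal M_i\to\tau_i]_{i\in I})$, $\Delta\vdash u:\mathrm{ch}(\sqcup_i\mathcal M_i)$, $\Lambda;y:[\tau_i]_{i\in I}\vdash r:\sigma$ infer $\Gamma\wedge\Delta\wedge\Lambda\vdash t(u,y.r):\sigma$. *)

(* Defs.v *)
(* Terms of Lambda-J with de Bruijn indices (alpha-equivalence
   built in), distant beta, strong normalisation, and the system \cap J with
   multisets represented as lists taken up to (deep) permutation. *)
From Stdlib Require Import Arith List Permutation.
Import ListNotations.

(* App t u r  represents  t(u, y.r)  with y bound (index 0) in r. *)
Inductive term : Type :=
| Var : nat -> term
| Lam : term -> term
| App : term -> term -> term -> term.

Fixpoint lift (k c : nat) (t : term) : term :=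
  match t with
  | Var n => if c <=? n then Var (n + k) else Var n
  | Lam t1 => Lam (lift k (S c) t1)
  | App t1 u r => App (lift k c t1) (lift k c u) (lift k (S c) r)
  end.

(* subst s c t : capture-avoiding substitution of s for index c in t,
   free indices above c are decremented (s lives outside the c binders). *)
Fixpoint subst (s : term) (c : nat) (t : term) : term :=
  match t with
  | Var n => if n =? c then lift c 0 s
             else if c <? n then Var (pred n) else Var n
  | Lam t1 => Lam (subst s (S c) t1)
  | App t1 u r => App (subst s c t1) (subst s c u) (subst s (S c) r)
  end.

Definition subst0 (s t : term) : term := subst s 0 t.

Inductive lctx : Type :=
| Hole : lctx
| LApp : term -> term -> lctx -> lctx.

Fixpoint plug (D : lctx) (s : term) : term :=
  match D with
  | Hole => s
  | LApp t u D' => App t u (plug D' s)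
  end.

Fixpoint depth (D : lctx) : nat :=
  match D with
  | Hole => 0
  | LApp _ _ D' => S (depth D')
  end.

(* Distant beta  D<\x.t>(u,y.r) |-> {{u/x}D<t>/y} r, closed under all contexts.
   u is lifted over the binders of D (de Bruijn version of the side condition). *)
Inductive step : term -> term -> Prop :=
| step_dbeta D t u r :
    step (App (plug D (Lam t)) u r)
         (subst0 (plug D (subst0 (lift (depth D) 0 u) t)) r)
| step_lam t t' : step t t' -> step (Lam t) (Lam t')
| step_app1 t t' u r : step t t' -> step (App t u r) (App t' u r)
| step_app2 t u u' r : step u u' -> step (App t u r) (App t u' r)
| step_app3 t u r r' : step r r' -> step (App t u r) (App t u r').

Inductive SN (t : term) : Prop :=
| SN_intro : (forall t', step t t' -> SN t') -> SN t.

(* Arr M s  represents  M -> s, M a finite multiset given as a list *)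
Inductive ty : Type :=
| TVar : nat -> ty
| Arr : list ty -> ty -> ty.

Inductive ty_eqv : ty -> ty -> Prop :=
| eqv_tvar a : ty_eqv (TVar a) (TVar a)
| eqv_arr M M' N s s' :
    Forall2 ty_eqv M M' -> Permutation M' N -> ty_eqv s s' ->
    ty_eqv (Arr M s) (Arr N s').

Definition ms_eqv (M N : list ty) : Prop :=
  exists M', Forall2 ty_eqv M M' /\ Permutation M' N.

Definition env := nat -> list ty.
Definition env_union (G D : env) : env := fun n => G n ++ D n.
Definition env_single (x : nat) (s : ty) : env :=
  fun n => if n =? x then [s] else [].
(* G = Gamma; x:M  with x the index 0  ==>  env_tail G = Gamma, G 0 = M *)
Definition env_tail (G : env) : env := fun n => G (S n).

(* ch(M) = M if M <> [], [tau] for an arbitrary tau otherwise (as a relation) *)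
Definition is_ch (M N : list ty) : Prop :=
  (M <> [] /\ N = M) \/ (M = [] /\ exists tau, N = [tau]).

Inductive typ : env -> term -> ty -> Prop :=
| typ_var x s : typ (env_single x s) (Var x) s
| typ_abs G t s : typ G t s -> typ (env_tail G) (Lam t) (Arr (G 0) s)
| typ_app (Ms : list (list ty * ty)) A B G D L t u r s :
    is_ch (map (fun p => Arr (fst p) (snd p)) Ms) A ->
    typm G t A ->
    is_ch (concat (map fst Ms)) B ->
    typm D u B ->
    typ L r s ->
    L 0 = map snd Ms ->
    typ (env_union G (env_union D (env_tail L))) (App t u r) s
(* judgements are on multiset equivalence classes *)
| typ_eqv G G' t s s' :
    typ G t s -> (forall n, ms_eqv (G n) (G' n)) -> ty_eqv s s' -> typ G' t s'
with typm : env -> term -> list ty -> Prop :=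
| typm_one G t s : typ G t s -> typm G t [s]
| typm_cons G D t s M : typ G t s -> typm D t M -> typm (env_union G D) t (s :: M).

(* Main.v *)
Require Import Defs.
From Stdlib Require Import Arith Lia List Permutation ClassicalEpsilon.
Import ListNotations.

Definition tdec (a b : ty) : {a = b} + {a <> b} := excluded_middle_informative (a = b).
Definition eqe (G H : env) := forall n, Permutation (G n) (H n).
Definition emp : env := fun _ => [].
Definition U (l : list env) : env := fold_right env_union emp l.

Inductive T : env -> term -> ty -> Prop :=
| T_var Γ x s : eqe Γ (env_single x s) -> T Γ (Var x) s
| T_abs Γ G t s M : T G t s -> eqe Γ (env_tail G) -> Permutation (G 0) M -> T Γ (Lam t) (Arr M s)
| T_app (Ms : list (list ty * ty)) A B (psA psB : list (env * ty)) L Γ t u r s :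
   is_ch (map (fun p => Arr (fst p) (snd p)) Ms) A ->
   Forall (fun p => T (fst p) t (snd p)) psA -> Permutation (map snd psA) A ->
   is_ch (concat (map fst Ms)) B ->
   Forall (fun p => T (fst p) u (snd p)) psB -> Permutation (map snd psB) B ->
   T L r s -> Permutation (L 0) (map snd Ms) ->
   eqe Γ (env_union (U (map fst psA)) (env_union (U (map fst psB)) (env_tail L))) ->
   T Γ (App t u r) s.

Ltac pcnt :=
  apply (proj2 (Permutation_count_occ tdec _ _)); let x := fresh "x" in intro x;
  repeat match goal with H : @Permutation ty _ _ |- _ =>
     let h := fresh "C" in pose proof (proj1 (Permutation_count_occ tdec _ _) H x) as h; clear H end;
  repeat rewrite ?count_occ_app, ?count_occ_nil in *; lia.

Fixpoint ty_eqv_refl (s : ty) : ty_eqv s s :=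
  match s with
  | TVar a => eqv_tvar a
  | Arr M s' => eqv_arr M M M s' s'
      ((fix F (l : list ty) : Forall2 ty_eqv l l :=
         match l with [] => Forall2_nil _ | x :: xs => Forall2_cons _ _ (ty_eqv_refl x) (F xs) end) M)
      (Permutation_refl M) (ty_eqv_refl s')
  end.

Lemma Forall2_refl_eqv l : Forall2 ty_eqv l l.
Proof. induction l; constructor; auto using ty_eqv_refl. Qed.

Lemma perm_ms M N : Permutation M N -> ms_eqv M N.
Proof. intro H. exists M. split; auto using Forall2_refl_eqv. Qed.

Lemma typ_perm G G' t s : typ G t s -> (forall n, Permutation (G n) (G' n)) -> typ G' t s.
Proof. intros H P. eapply typ_eqv; eauto using perm_ms, ty_eqv_refl. Qed.

Lemma perm_concat (l l' : list (list ty)) : Permutation l l' -> Permutation (concat l) (concat l').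
Proof.
  induction 1; simpl; auto.
  - apply Permutation_app_head; auto.
  - rewrite !app_assoc. apply Permutation_app_tail, Permutation_app_comm.
  - eapply perm_trans; eauto.
Qed.

Lemma U_perm (l l' : list env) : Permutation l l' -> eqe (U l) (U l').
Proof.
  induction 1; intro n; simpl; unfold env_union; auto.
  - apply Permutation_app_head; auto.
  - rewrite !app_assoc. apply Permutation_app_tail, Permutation_app_comm.
  - eapply perm_trans; eauto.
Qed.

Lemma mk_typm t (ps : list (env * ty)) : ps <> [] ->
  Forall (fun p => typ (fst p) t (snd p)) ps ->
  exists G, typm G t (map snd ps) /\ eqe G (U (map fst ps)).
Proof.
  induction ps as [|p ps IH]; intros Hne HF; [congruence|].
  inversion HF; subst.
  destruct ps as [|q ps'].
  - exists (fst p). split. constructor; auto. intro n; simpl; unfold env_union, emp; rewrite app_nil_r; auto.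
  - destruct IH as [G [HG HE]]; auto. congruence.
    exists (env_union (fst p) G). split. simpl. constructor; auto.
    intro n. specialize (HE n). simpl in *. unfold env_union in *. apply Permutation_app_head; auto.
Qed.

Lemma is_ch_perm (M M' A : list ty) : is_ch M A -> Permutation M M' ->
  exists A', is_ch M' A' /\ Permutation A A'.
Proof.
  intros [[Hne ->]|[-> [tau ->]]] HP.
  - exists M'. split; auto. left. split; auto. intro; subst. apply Permutation_sym, Permutation_nil in HP. auto.
  - apply Permutation_nil in HP; subst. exists [tau]. split; auto. right; eauto.
Qed.

Lemma conv t : forall Γ σ, T Γ t σ -> typ Γ t σ.
Proof.
  induction t as [x|t IH|t IHt u IHu r IHr]; intros Γ σ H; inversion H; subst.
  - eapply typ_perm. constructor. intro n. symmetry. auto.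
  - eapply typ_eqv. apply typ_abs. apply IH; eauto.
    intro n. apply perm_ms. symmetry; auto.
    apply eqv_arr with (M' := G 0); auto using Forall2_refl_eqv, ty_eqv_refl.
  -
    apply Permutation_map_inv in H12 as [Ms' [HL HMs]].
    destruct (is_ch_perm _ (map (fun p => Arr (fst p) (snd p)) Ms') _ H3) as [A' [HA' PA]].
    { apply Permutation_map; auto. }
    destruct (is_ch_perm _ (concat (map fst Ms')) _ H6) as [B' [HB' PB]].
    { apply perm_concat, Permutation_map; auto. }
    assert (PA2 : Permutation A' (map snd psA)) by (symmetry; eapply perm_trans; eauto).
    assert (PB2 : Permutation B' (map snd psB)) by (symmetry; eapply perm_trans; eauto).
    apply Permutation_map_inv in PA2 as [psA' [EA PsA]].
    apply Permutation_map_inv in PB2 as [psB' [EB PsB]].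
    assert (FA : Forall (fun p => typ (fst p) t (snd p)) psA').
    { eapply Permutation_Forall; eauto. eapply Forall_impl; [|eauto]. intros; apply IHt; auto. }
    assert (FB : Forall (fun p => typ (fst p) u (snd p)) psB').
    { eapply Permutation_Forall; eauto. eapply Forall_impl; [|eauto]. intros; apply IHu; auto. }
    assert (NA : psA' <> []). { intro; subst; simpl in HA'. destruct HA' as [[? ?]|[? [? ?]]]; congruence. }
    assert (NB : psB' <> []). { intro; subst; simpl in HB'. destruct HB' as [[? ?]|[? [? ?]]]; congruence. }
    destruct (mk_typm _ _ NA FA) as [GA [TA EA']].
    destruct (mk_typm _ _ NB FB) as [GB [TB EB']].
    rewrite <- EA in TA. rewrite <- EB in TB.
    eapply typ_perm. eapply typ_app with (Ms := Ms'); eauto; apply IHr; auto.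
    intro n. 
    pose proof (U_perm _ _ (Permutation_map fst PsA) n).
    pose proof (U_perm _ _ (Permutation_map fst PsB) n).
    pose proof (EA' n). pose proof (EB' n). pose proof (H13 n).
    unfold env_union, env_tail in *. pcnt.
Qed.

Ltac arcase :=
  repeat match goal with
  | |- context [?a <? ?b] => destruct (Nat.ltb_spec a b)
  | |- context [?a =? ?b] => destruct (Nat.eqb_spec a b)
  | |- context [?a <=? ?b] => destruct (Nat.leb_spec a b)
  | H : context [?a <? ?b] |- _ => destruct (Nat.ltb_spec a b)
  | H : context [?a =? ?b] |- _ => destruct (Nat.eqb_spec a b)
  | H : context [?a <=? ?b] |- _ => destruct (Nat.leb_spec a b)
  end; try (exfalso; lia).

Definition liftenv (k c : nat) (G : env) : env :=
  fun n => if n <? c then G n else if n <? c + k then [] else G (n - k).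

Lemma list_map_env (P Q : env -> ty -> Prop) (F : env -> env) :
  (forall G H, eqe (F (env_union G H)) (env_union (F G) (F H))) -> eqe (F emp) emp ->
  (forall Γ σ, P Γ σ -> exists Γ', Q Γ' σ /\ eqe Γ (F Γ')) ->
  forall ps, Forall (fun p => P (fst p) (snd p)) ps ->
  exists ps', Forall (fun p => Q (fst p) (snd p)) ps' /\ map snd ps' = map snd ps /\
    eqe (U (map fst ps)) (F (U (map fst ps'))).
Proof.
  intros HU HE HP ps HF. induction HF as [|p ps Hp HF IH].
  - exists []. repeat split; auto. intro n. symmetry. apply HE.
  - destruct IH as [ps' [F1 [F2 F3]]]. destruct (HP _ _ Hp) as [G' [HQ HG]].
    exists ((G', snd p) :: ps'). repeat split; simpl; auto. f_equal; auto.
    intro n. pose proof (HU G' (U (map fst ps')) n). pose proof (HG n). pose proof (F3 n).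
    unfold env_union in *. simpl. pcnt.
Qed.

Lemma liftenv_U k c : forall G H, eqe (liftenv k c (env_union G H)) (env_union (liftenv k c G) (liftenv k c H)).
Proof. intros G H n. unfold liftenv, env_union. arcase; auto. Qed.
Lemma liftenv_emp k c : eqe (liftenv k c emp) emp.
Proof. intros n. unfold liftenv, emp. arcase; auto. Qed.

Lemma AL s : forall k c Γ σ, T Γ (lift k c s) σ -> exists Γ', T Γ' s σ /\ eqe Γ (liftenv k c Γ').
Proof.
  induction s as [n|s IH|s1 IH1 s2 IH2 s3 IH3]; intros k c Γ σ H; simpl in H.
  - exists (env_single n σ). split. constructor. intro; auto.
    destruct (Nat.leb_spec c n); inversion H; subst; intro m; specialize (H3 m);
    unfold liftenv, env_single in *; arcase; subst; auto; try (exfalso; lia).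
  - inversion H; subst. destruct (IH _ _ _ _ H1) as [G' [HT HE]].
    exists (env_tail G'). split.
    + econstructor; eauto. intro; auto. pose proof (HE 0). unfold liftenv in *. simpl in *.
      eapply perm_trans; [symmetry; eauto|eauto].
    + intro m. specialize (H2 m). pose proof (HE (S m)). unfold liftenv, env_tail in *.
      arcase; eapply perm_trans; eauto.
      replace (S m - k) with (S (m - k)) in * by lia. auto.
  - inversion H; subst.
    destruct (list_map_env _ _ _ (liftenv_U k c) (liftenv_emp k c) (IH1 k c) _ H4) as [psA' [FA [EA UA]]].
    destruct (list_map_env _ _ _ (liftenv_U k c) (liftenv_emp k c) (IH2 k c) _ H7) as [psB' [FB [EB UB]]].
    destruct (IH3 _ _ _ _ H10) as [L' [HL HLE]].
    exists (env_union (U (map fst psA')) (env_union (U (map fst psB')) (env_tail L'))). split.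
    + eapply T_app with (Ms := Ms); eauto. rewrite EA; auto. rewrite EB; auto.
      pose proof (HLE 0). unfold liftenv in *. simpl in *. eapply perm_trans; [symmetry; eauto|auto].
      intro; auto.
    + intro m. specialize (H13 m). pose proof (UA m). pose proof (UB m). pose proof (HLE (S m)).
      unfold liftenv, env_union, env_tail in *. arcase; try pcnt.
      replace (S m - k) with (S (m - k)) in * by lia. pcnt.
Qed.

Definition down (c : nat) (L : env) : env := fun n => if n <? c then L n else L (S n).
Definition shift (c : nat) (D : env) : env := fun n => if n <? c then [] else D (n - c).

Definition ASc r c s Γ σ := exists L ps, T L r σ /\ Permutation (L c) (map snd ps) /\
  Forall (fun p => T (fst p) s (snd p)) ps /\
  eqe Γ (env_union (down c L) (shift c (U (map fst ps)))).

Lemma AS_list r c s : (forall Γ σ, T Γ (subst s c r) σ -> ASc r c s Γ σ) ->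
  forall qs, Forall (fun p => T (fst p) (subst s c r) (snd p)) qs ->
  exists qs' pss, Forall (fun p => T (fst p) r (snd p)) qs' /\ map snd qs' = map snd qs /\
    Forall (fun p => T (fst p) s (snd p)) pss /\ Permutation (U (map fst qs') c) (map snd pss) /\
    eqe (U (map fst qs)) (env_union (down c (U (map fst qs'))) (shift c (U (map fst pss)))).
Proof.
  intros IH qs HF. induction HF as [|p qs Hp HF IHq].
  - exists [], []. repeat split; auto. intro n; unfold down, shift, emp, env_union; simpl. arcase; auto.
  - destruct IHq as [qs' [pss [F1 [F2 [F3 [F4 F5]]]]]].
    destruct (IH _ _ Hp) as [L [ps [HT [HP [HF' HE]]]]].
    exists ((L, snd p) :: qs'), (ps ++ pss). repeat split; simpl; auto.
    + f_equal; auto.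
    + apply Forall_app; auto.
    + rewrite map_app. unfold env_union. apply Permutation_app; auto.
    + intro n. pose proof (HE n). pose proof (F5 n).
      assert (UA : forall l1 l2 m, Permutation (U (l1 ++ l2) m) (U l1 m ++ U l2 m)).
      { induction l1; intros; simpl; auto. unfold env_union; rewrite <- app_assoc; apply Permutation_app_head; auto. }
      pose proof (UA (map fst ps) (map fst pss) (n - c)). rewrite map_app.
      unfold down, shift, env_union in *. arcase; pcnt.
Qed.

Lemma AS r : forall c s Γ σ, T Γ (subst s c r) σ -> ASc r c s Γ σ.
Proof.
  induction r as [n|r IH|r1 IH1 r2 IH2 r3 IH3]; intros c s Γ σ H; simpl in H.
  - destruct (Nat.eqb_spec n c).
    + subst. destruct (AL _ _ _ _ _ H) as [G' [HT HE]].
      exists (env_single c σ), [(G', σ)]. repeat split; auto.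
      * constructor. intro; auto.
      * unfold env_single. rewrite Nat.eqb_refl. auto.
      * intro m. specialize (HE m). unfold liftenv, down, shift, env_single, env_union, emp in *.
        unfold U in *; cbn [fold_right map fst] in *; unfold env_union, emp in *. arcase; try pcnt.
    + destruct (Nat.ltb_spec c n).
      * inversion H; subst. exists (env_single n σ), []. repeat split; auto.
        constructor; intro; auto. unfold env_single. destruct (Nat.eqb_spec c n); try lia; auto.
        intro m. specialize (H3 m). unfold down, shift, env_single, env_union, emp, U in *; cbn [fold_right map fst] in *.
        arcase; subst; try pcnt.
      * inversion H; subst. exists (env_single n σ), []. repeat split; auto.
        constructor; intro; auto. unfold env_single. destruct (Nat.eqb_spec c n); try lia; auto.
        intro m. specialize (H3 m). unfold down, shift, env_single, env_union, emp, U in *; cbn [fold_right map fst] in *.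
        arcase; subst; try pcnt.
  - inversion H; subst. destruct (IH _ _ _ _ H1) as [L1 [ps [HT [HP [HF HE]]]]].
    exists (env_tail L1), ps. repeat split; auto.
    + econstructor; eauto. intro; auto. pose proof (HE 0). unfold down, shift, env_union in *.
      simpl in *. rewrite app_nil_r in *. eapply perm_trans; [symmetry; eauto|eauto].
    + intro m. specialize (H2 m). pose proof (HE (S m)). unfold down, shift, env_union, env_tail in *.
      arcase; try pcnt. replace (S m - S c) with (m - c) in * by lia. pcnt.
  - inversion H; subst.
    destruct (AS_list _ _ _ (IH1 c s) _ H4) as [psA' [pA [FA [EA [FpA [PA UA]]]]]].
    destruct (AS_list _ _ _ (IH2 c s) _ H7) as [psB' [pB [FB [EB [FpB [PB UB]]]]]].
    destruct (IH3 _ _ _ _ H10) as [L3 [p3 [HT3 [HP3 [HF3 HE3]]]]].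
    exists (env_union (U (map fst psA')) (env_union (U (map fst psB')) (env_tail L3))), (pA ++ pB ++ p3).
    assert (UA' : forall l1 l2 m, Permutation (U (l1 ++ l2) m) (U l1 m ++ U l2 m)).
    { induction l1; intros; simpl; auto. unfold env_union; rewrite <- app_assoc; apply Permutation_app_head; auto. }
    repeat split.
    + eapply T_app with (Ms := Ms); eauto. rewrite EA; auto. rewrite EB; auto.
      pose proof (HE3 0). unfold down, shift, env_union in *. simpl in *. rewrite app_nil_r in *.
      eapply perm_trans; [symmetry; eauto|eauto].
      intro; auto.
    + rewrite !map_app. unfold env_union, env_tail. apply Permutation_app; auto. apply Permutation_app; auto.
    + apply Forall_app; split; auto. apply Forall_app; split; auto.
    + intro m. specialize (H13 m). pose proof (UA m). pose proof (UB m). pose proof (HE3 (S m)).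
      rewrite !map_app.
      pose proof (UA' (map fst pA) (map fst pB ++ map fst p3) (m - c)).
      pose proof (UA' (map fst pB) (map fst p3) (m - c)).
      unfold down, shift, env_union, env_tail in *. arcase; try pcnt.
      replace (S m - S c) with (m - c) in * by lia. pcnt.
Qed.

Definition typable (x : term) := exists Γ σ, T Γ x σ.

Lemma core (u t : term) : forall D j L τ,
  T L (plug D (subst (lift (depth D + j) 0 u) 0 t)) τ ->
  exists L' M qs, T L' (plug D (Lam t)) (Arr M τ) /\ Permutation M (map snd qs) /\
    Forall (fun p => T (fst p) u (snd p)) qs /\ forall n, n < j -> Permutation (L' n) (L n).
Proof.
  induction D as [|t1 u1 D IH]; intros j L τ H; simpl in H.
  - destruct (AS _ _ _ _ _ H) as [Lt [ps [HT [HP [HF HE]]]]].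
    destruct (list_map_env _ _ _ (liftenv_U j 0) (liftenv_emp j 0) (fun G s H => AL u j 0 G s H) _ HF)
      as [ps' [F1 [F2 F3]]].
    exists (env_tail Lt), (Lt 0), ps'. repeat split; auto.
    + econstructor; eauto. intro; auto.
    + rewrite F2; auto.
    + intros n Hn. specialize (HE n). specialize (F3 n).
      unfold down, shift, liftenv, env_union, env_tail in *. arcase.
      rewrite Nat.sub_0_r in *. pcnt.
  - inversion H; subst.
    rewrite <- Nat.add_succ_r in H10.
    destruct (IH _ _ _ H10) as [L' [M [qs [HT [HP [HF HE]]]]]].
    exists (env_union (U (map fst psA)) (env_union (U (map fst psB)) (env_tail L'))), M, qs.
    repeat split; auto.
    + simpl. eapply T_app with (Ms := Ms); eauto.
      eapply perm_trans; [apply HE; lia|auto]. intro; auto.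
    + intros n Hn. specialize (H13 n). pose proof (HE (S n)).
      unfold env_union, env_tail in *. assert (S n < S j) by lia. specialize (H0 H1). pcnt.
Qed.

Lemma mk_ch (X : term) (N : list ty) (ps : list (env * ty)) : typable X ->
  Forall (fun p => T (fst p) X (snd p)) ps -> Permutation (map snd ps) N ->
  exists A ps', is_ch N A /\ Forall (fun p => T (fst p) X (snd p)) ps' /\ Permutation (map snd ps') A.
Proof.
  intros [G [s HX]] HF HP. destruct N as [|a N].
  - exists [s], [(G, s)]. repeat split; auto. right; eauto.
  - exists (a :: N), ps. repeat split; auto. left; split; auto; congruence.
Qed.

Lemma root_exp D t u r Γ σ : typable (plug D (Lam t)) -> typable u ->
  T Γ (subst0 (plug D (subst0 (lift (depth D) 0 u) t)) r) σ ->
  exists Γ', T Γ' (App (plug D (Lam t)) u r) σ.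
Proof.
  intros HA HB H. unfold subst0 in H.
  destruct (AS _ _ _ _ _ H) as [L [ps [HT [HP [HF _]]]]].
  assert (K : exists Ms psA psB, map snd Ms = map snd ps /\
    Forall (fun p => T (fst p) (plug D (Lam t)) (snd p)) psA /\
    map snd psA = map (fun p => Arr (fst p) (snd p)) Ms /\
    Forall (fun p => T (fst p) u (snd p)) psB /\ Permutation (map snd psB) (concat (map fst Ms))).
  { clear HP. induction HF as [|p ps Hp HF IH].
    - exists [], [], []. repeat split; auto.
    - destruct IH as [Ms [psA [psB [E1 [F1 [E2 [F2 P2]]]]]]].
      rewrite <- (Nat.add_0_r (depth D)) in Hp.
      destruct (core _ _ _ _ _ _ Hp) as [L' [M [qs [HT' [HP' [HF' _]]]]]].
      exists ((M, snd p) :: Ms), ((L', Arr M (snd p)) :: psA), (qs ++ psB).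
      repeat split; simpl; auto.
      + f_equal; auto.
      + f_equal; auto.
      + apply Forall_app; auto.
      + rewrite map_app. apply Permutation_app; auto. symmetry; auto. }
  destruct K as [Ms [psA [psB [E1 [F1 [E2 [F2 P2]]]]]]].
  destruct (mk_ch _ (map (fun p => Arr (fst p) (snd p)) Ms) _ HA F1) as [A [psA' [C1 [G1 Q1]]]].
  { rewrite E2; auto. }
  destruct (mk_ch _ (concat (map fst Ms)) _ HB F2 P2) as [B [psB' [C2 [G2 Q2]]]].
  eexists. eapply T_app; eauto. rewrite E1; auto. intro; auto.
Qed.

Inductive Ne : term -> Prop :=
| ne_var x : Ne (Var x)
| ne_app a b c : Ne a -> Ne c -> Ne (App a b c).

Inductive wctx : Type :=
| WHole : wctx
| WL : wctx -> term -> term -> wctx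
| WR : term -> term -> wctx -> wctx.

Fixpoint plugW (W : wctx) (x : term) : term :=
  match W with
  | WHole => x
  | WL W u r => App (plugW W x) u r
  | WR n u W => App n u (plugW W x)
  end.

Inductive goodW : wctx -> Prop :=
| gH : goodW WHole
| gL W u r : goodW W -> goodW (WL W u r)
| gR n u W : Ne n -> goodW W -> goodW (WR n u W).

Inductive sub : term -> term -> Prop :=
| sub_refl t : sub t t
| sub_lam s t : sub s t -> sub s (Lam t)
| sub_app1 s t u r : sub s t -> sub s (App t u r)
| sub_app2 s t u r : sub s u -> sub s (App t u r)
| sub_app3 s t u r : sub s r -> sub s (App t u r).

Definition psub (s t : term) : Prop :=
  match t with
  | Var _ => False
  | Lam t1 => sub s t1
  | App a b c => sub s a \/ sub s b \/ sub s c
  end.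

Lemma sub_trans a b c : sub a b -> sub b c -> sub a c.
Proof. intros H1 H2. revert H1. induction H2; intros; [auto|apply sub_lam|apply sub_app1|apply sub_app2|apply sub_app3]; auto. Qed.

Lemma psub_sub s t : psub s t -> sub s t.
Proof. destruct t; simpl; intuition; [apply sub_lam|apply sub_app1|apply sub_app2|apply sub_app3]; auto. Qed.

Lemma sub_psub s t : sub s t -> s = t \/ psub s t.
Proof. inversion 1; subst; simpl; auto. Qed.

Lemma choose_list (P : env -> ty -> Prop) (f : ty -> ty) : (forall τ, exists Γ, P Γ (f τ)) ->
  forall N, exists ps, Forall (fun p => P (fst p) (snd p)) ps /\ map snd ps = map f N.
Proof.
  intros H N. induction N as [|a N IH].
  - exists []; auto.
  - destruct IH as [ps [F E]]. destruct (H a) as [G HG]. exists ((G, f a) :: ps).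
    split; simpl; auto. f_equal; auto.
Qed.

Lemma app_ne a b c L σ : (forall τ, exists Γ, T Γ a τ) -> typable b -> T L c σ ->
  exists Γ, T Γ (App a b c) σ.
Proof.
  intros Ha Hb Hc.
  destruct (choose_list (fun G s => T G a s) (fun τ => Arr [] τ) (fun τ => Ha _) (L 0)) as [ps [F E]].
  set (Ms := map (fun τ => ([] : list ty, τ)) (L 0)).
  assert (HA : typable a). { destruct (Ha (TVar 0)) as [G HG]. exists G, (TVar 0); auto. }
  destruct (mk_ch _ (map (fun p => Arr (fst p) (snd p)) Ms) _ HA F) as [A [psA [C1 [G1 Q1]]]].
  { rewrite E. unfold Ms. rewrite map_map. simpl. auto. }
  assert (EC : concat (map fst Ms) = []).
  { unfold Ms. clear. induction (L 0); simpl; auto. }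
  destruct (mk_ch b (concat (map fst Ms)) [] Hb (Forall_nil _)) as [B [psB [C2 [G2 Q2]]]].
  { rewrite EC; auto. }
  eexists. eapply T_app with (Ms := Ms); eauto.
  unfold Ms. rewrite map_map. simpl. rewrite map_id. auto. intro; auto.
Qed.

Lemma ne_typ n : Ne n -> (forall s, sub s n -> typable s) -> forall σ, exists Γ, T Γ n σ.
Proof.
  induction 1 as [x|a b c Na IHa Nc IHc]; intros Hs σ.
  - exists (env_single x σ). constructor. intro; auto.
  - destruct (IHc (fun s h => Hs s (sub_app3 _ _ _ _ h)) σ) as [L HL].
    eapply app_ne; eauto.
    intro τ. apply IHa. intros s h. apply Hs. apply sub_app1; auto.
    apply Hs. apply sub_app2. constructor.
Qed.

Lemma tri a : (exists D t0, a = plug D (Lam t0)) \/ Ne a \/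
  exists W D t0 u0 r0, goodW W /\ a = plugW W (App (plug D (Lam t0)) u0 r0).
Proof.
  induction a as [x|t IH|a1 IH1 b1 _ c1 IH3].
  - right; left; constructor.
  - left. exists Hole, t. auto.
  - destruct IH1 as [[D [t0 E]]|[N1|[W [D [t0 [u0 [r0 [GW E]]]]]]]].
    + right; right. exists WHole, D, t0, b1, c1. subst; split; auto. constructor.
    + destruct IH3 as [[D [t0 E]]|[N3|[W [D [t0 [u0 [r0 [GW E]]]]]]]].
      * left. exists (LApp a1 b1 D), t0. subst; auto.
      * right; left. constructor; auto.
      * right; right. exists (WR a1 b1 W), D, t0, u0, r0. subst; split; auto. constructor; auto.
    + right; right. exists (WL W b1 c1), D, t0, u0, r0. subst; split; auto. constructor; auto.
Qed.

Lemma step_plugW W x y : step x y -> step (plugW W x) (plugW W y).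
Proof. intros H; induction W; simpl; auto; [apply step_app1|apply step_app3]; auto. Qed.

Lemma map_forall_same X X' : (forall Γ σ, T Γ X' σ -> exists Γ', T Γ' X σ) ->
  forall ps, Forall (fun p => T (fst p) X' (snd p)) ps ->
  exists ps', Forall (fun p => T (fst p) X (snd p)) ps' /\ map snd ps' = map snd ps.
Proof.
  intros H ps HF. induction HF as [|p ps Hp HF IH].
  - exists []; auto.
  - destruct IH as [ps' [F E]]. destruct (H _ _ Hp) as [G HG]. exists ((G, snd p) :: ps').
    split; simpl; auto. f_equal; auto.
Qed.

Lemma W_exp D t0 u0 r0 : forall W, goodW W -> forall Γ' σ,
  (forall s, psub s (plugW W (App (plug D (Lam t0)) u0 r0)) -> typable s) ->
  T Γ' (plugW W (subst0 (plug D (subst0 (lift (depth D) 0 u0) t0)) r0)) σ ->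
  exists Γ, T Γ (plugW W (App (plug D (Lam t0)) u0 r0)) σ.
Proof.
  induction 1 as [|W u r GW IH|n u W Nn GW IH]; intros Γ' σ Hs H; simpl in *.
  - eapply root_exp; eauto. apply Hs; left; constructor. apply Hs; right; left; constructor.
  - inversion H; subst.
    destruct (map_forall_same (plugW W (App (plug D (Lam t0)) u0 r0)) _
      (fun G s h => IH G s (fun s' h' => Hs s' (or_introl (psub_sub _ _ h'))) h) _ H4) as [ps' [F E]].
    eexists. eapply T_app; eauto. rewrite E; auto. intro; auto.
  - inversion H; subst.
    destruct (IH _ _ (fun s' h' => Hs s' (or_intror (or_intror (psub_sub _ _ h')))) H10) as [L' HL'].
    eapply app_ne; eauto.
    intro τ. apply ne_typ; auto; intros s h; apply Hs; left; auto.
    apply Hs. right; left; constructor.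
Qed.

Definition imm (y x : term) : Prop :=
  match x with
  | Var _ => False
  | Lam t => y = t
  | App a b c => y = a \/ y = b \/ y = c
  end.

Definition Rl (y x : term) : Prop := step x y \/ imm y x.

Lemma sub_step s t : sub s t -> forall s', step s s' -> exists t', step t t' /\ sub s' t'.
Proof.
  induction 1; intros s' Hs.
  - exists s'; split; auto; constructor.
  - destruct (IHsub _ Hs) as [t' [H1 H2]]. exists (Lam t'); split; [apply step_lam|apply sub_lam]; auto.
  - destruct (IHsub _ Hs) as [t' [H1 H2]]. exists (App t' u r); split; [apply step_app1|apply sub_app1]; auto.
  - destruct (IHsub _ Hs) as [t' [H1 H2]]. exists (App t t' r); split; [apply step_app2|apply sub_app2]; auto.
  - destruct (IHsub _ Hs) as [t' [H1 H2]]. exists (App t u t'); split; [apply step_app3|apply sub_app3]; auto.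
Qed.

Lemma SN_acc t : SN t -> forall s, sub s t -> Acc Rl s.
Proof.
  induction 1 as [t _ IH]. intro s. induction s as [x|s1 IH1|a IHa b IHb c IHc]; intros Hs;
  constructor; intros y [Hst|Him].
  all: try (destruct (sub_step _ _ Hs _ Hst) as [t' [H1 H2]]; eapply IH; eauto).
  - destruct Him.
  - simpl in Him; subst. apply IH1. eapply sub_trans; eauto. constructor; constructor.
  - simpl in Him. destruct Him as [E|[E|E]]; subst y.
    + apply IHa. eapply sub_trans; eauto. apply sub_app1; constructor.
    + apply IHb. eapply sub_trans; eauto. apply sub_app2; constructor.
    + apply IHc. eapply sub_trans; eauto. apply sub_app3; constructor.
Qed.

Lemma main_acc t : Acc Rl t -> forall s, sub s t -> typable s.
Proof.
  induction 1 as [t _ IH]. intros s Hs.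
  destruct (sub_psub _ _ Hs) as [->|Hp].
  2:{ destruct t; simpl in Hp; try contradiction.
      - eapply IH; eauto. right; simpl; auto.
      - destruct Hp as [h|[h|h]]; eapply IH; eauto; right; simpl; auto. }
  assert (HP : forall s, psub s t -> typable s).
  { intros s' Hp. destruct t; simpl in Hp; try contradiction.
    - eapply IH; eauto. right; simpl; auto.
    - destruct Hp as [h|[h|h]]; eapply IH; eauto; right; simpl; auto. }
  destruct t as [x|t1|a b c].
  - exists (env_single x (TVar 0)), (TVar 0). constructor. intro; auto.
  - destruct (HP t1 (sub_refl _)) as [G [s HT]]. eexists _, _. econstructor; eauto. intro; auto.
  - destruct (tri a) as [[D [t0 E]]|[Na|[W [D [t0 [u0 [r0 [GW E]]]]]]]].
    + subst a. destruct (IH _ (or_introl (step_dbeta D t0 b c)) _ (sub_refl _)) as [G [s HT]].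
      destruct (root_exp _ _ _ _ _ _ (HP _ (or_introl (sub_refl _))) (HP _ (or_intror (or_introl (sub_refl _)))) HT) as [G' HG'].
      exists G', s; auto.
    + destruct (HP c (or_intror (or_intror (sub_refl _)))) as [L [s HL]].
      destruct (app_ne a b c L s) as [G HG]; eauto.
      intro τ. apply ne_typ; auto. intros s' h. apply HP. left; auto.
      apply HP. right; left; constructor.
      exists G, s; auto.
    + subst a.
      assert (St : step (plugW (WL W b c) (App (plug D (Lam t0)) u0 r0))
                        (plugW (WL W b c) (subst0 (plug D (subst0 (lift (depth D) 0 u0) t0)) r0))).
      { apply step_plugW. constructor. }
      destruct (IH _ (or_introl St) _ (sub_refl _)) as [G [s HT]].
      destruct (W_exp D t0 u0 r0 (WL W b c) (gL _ _ _ GW) G s HP HT) as [G' HG'].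
      exists G', s; auto.
Qed.

Theorem mainTheorem13 :
  forall t : term, SN t -> exists (G : env) (s : ty), typ G t s.
Proof.
  intros t H. destruct (main_acc t (SN_acc t H t (sub_refl _)) t (sub_refl _)) as [G [s HT]].
  exists G, s. apply conv; auto.
Qed.
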